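(* Let $p>3$ be a prime, $q=p^h$, and $a,b\in\mathbb{F}_{q^2}^*$. Then $\deg\gcd\bigl(N_{a,b}(X),D_{a,b}(X)\bigr)=2$ if and only if $b=v/a^2$ for some $v\in\mathbb{F}_q^*$ satisfying $v^2-a^{q+1}v-a^{3q+3}=0$. In this case the common factor is (up to a scalar) $bX^2-a^qX-a^{q+1}+b^{q+1}$.
   Context: $N_{a,b}(X)=a^qX^3+X^2+b^q$ and $D_{a,b}(X)=bX^3+X+a$, polynomials in $\mathbb{F}_{q^2}[X]$; gcd means the monic greatest common divisor in $\mathbb{F}_{q^2}[X]$. *)

(* Defs.v *)
From HB Require Import structures.
From mathcomp Require Import all_boot all_order all_algebra all_field.
Set Implicit Arguments. Unset Strict Implicit. Unset Printing Implicit Defensive.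
Import GRing.Theory.
Local Open Scope ring_scope.

Definition Npoly (F : fieldType) (q : nat) (a b : F) : {poly F} :=
  (a ^+ q) *: 'X^3 + 'X^2 + (b ^+ q)%:P.
Definition Dpoly (F : fieldType) (a b : F) : {poly F} :=
  b *: 'X^3 + 'X + a%:P.

(* Main.v *)
Require Import Defs.
From HB Require Import structures.
From mathcomp Require Import all_boot all_order all_algebra all_field.
From mathcomp Require Import ring.
Import GRing.Theory.
Local Open Scope ring_scope.

Theorem mainTheorem4 (p h : nat) (F : finFieldType) (a b : F) :
  prime p -> (3 < p)%N -> (0 < h)%N -> #|F| = ((p ^ h) ^ 2)%N ->
  a != 0 -> b != 0 ->
  let q := (p ^ h)%N in
  ((size (gcdp (Npoly q a b) (Dpoly a b)) = 3%N) <->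
     (exists v : F, [/\ v ^+ q = v, v != 0,
        v ^+ 2 - a ^+ q.+1 * v - a ^+ (3 * q + 3) = 0 & b = v / a ^+ 2]))
  /\
  (size (gcdp (Npoly q a b) (Dpoly a b)) = 3%N ->
     gcdp (Npoly q a b) (Dpoly a b) %=
       b *: 'X^2 - (a ^+ q) *: 'X + (b ^+ q.+1 - a ^+ q.+1)%:P).
Proof.
move=> _ _ _ _ an0 bn0 q.
set N := Npoly q a b; set D := Dpoly a b.
set Q := b *: 'X^2 - (a ^+ q) *: 'X + (b ^+ q.+1 - a ^+ q.+1)%:P.
set x := a ^+ q; set y := b ^+ q.
have xn0 : x != 0 by rewrite expf_neq0.
have yn0 : y != 0 by rewrite expf_neq0.
have hQ : Q = b *: N - x *: D.
  rewrite /Q /N /D /Npoly /Dpoly !exprS -/x -/y -!mul_polyC polyCB !polyCM.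
  ring.
have sQ : size Q = 3%N.
  have -> : Q = (b%:P * 'X + (- x)%:P) * 'X + (b * y - a * x)%:P.
    rewrite /Q !exprS -/x -/y -!mul_polyC polyCN; ring.
  have h1 : size (b%:P * 'X + (- x)%:P) = 2%N.
    by rewrite size_MXaddC polyC_eq0 (negbTE bn0) size_polyC bn0.
  by rewrite size_MXaddC h1 -size_poly_eq0 h1.
have Qn0 : Q != 0 by rewrite -size_poly_eq0 sQ.
have gQ : gcdp N D %| Q.
  by rewrite hQ dvdp_sub // dvdpZr // ?dvdp_gcdl ?dvdp_gcdr.
have key : size (gcdp N D) = 3%N <-> Q %| D.
  split.
    move=> s3; have e : gcdp N D %= Q by rewrite -dvdp_size_eqp // s3 sQ.
    by rewrite -(eqp_dvdl D e) dvdp_gcdr.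
  move=> QD.
  have QN : Q %| N.
    have -> : N = b^-1 *: (Q + x *: D) by rewrite hQ subrK scalerA mulVf // scale1r.
    by rewrite dvdpZr ?invr_eq0 // dvdp_add // dvdpZr.
  have e : gcdp N D %= Q by rewrite /eqp gQ dvdp_gcd QN QD.
  by rewrite (eqp_size e) sQ.
set r1 := b - (b*y - a*x)*b + x^+2.
set r0 := a*b - (b*y - a*x)*x.
have QD : Q %| D <-> r1 = 0 /\ r0 = 0.
  have Id : b *: D = Q * (b%:P * 'X + x%:P) + (r1%:P * 'X + r0%:P).
    rewrite /Q /D /Dpoly /r1 /r0 !exprS -/x -/y -!mul_polyC !(polyCD, polyCN, polyCM, rmorphXn).
    ring.
  split.
    move=> QD.
    have QR : Q %| r1%:P * 'X + r0%:P.
      by rewrite -(dvdp_addr _ (dvdp_mulr (b%:P * 'X + x%:P) (dvdpp Q))) -Id dvdpZr.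
    have R0 : r1%:P * 'X + r0%:P = 0.
      apply/eqP; apply: contraT => Rn0.
      have := dvdp_leq Rn0 QR; rewrite sQ size_MXaddC.
      case: ifP => // _; rewrite size_polyC; by case: (r1 != 0).
    have : size (r1%:P*'X + r0%:P) == 0%N by rewrite size_poly_eq0 R0.
    rewrite size_MXaddC polyC_eq0; case: (r1 =P 0); case: (r0 =P 0) => //.
  case=> h1 h0.
  rewrite -(dvdpZr Q D bn0) Id h1 h0 mul0r add0r addr0; exact: dvdp_mulr.
have I0 : -(a^+2*x)*r0 = (a^+2*b)*(x^+2*y) - (a*x)*(a^+2*b) - (a*x)^+3.
  rewrite /r0; ring.
have I1 : -(x^+2*a^+4)*r1 = (x^+2*y)*(a^+2*b)^+2 - (a*x)^+4 - (a*x)^+2*(a^+2*b)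
            - (a*x)^+3*(a^+2*b).
  rewrite /r1; ring.
have Ax : a ^+ q.+1 = a * x by rewrite exprS.
have A3 : a ^+ (3 * q + 3) = (a * x)^+3.
  have -> : (3 * q + 3 = q.+1 * 3)%N.
  by rewrite [RHS]mulnC mulnSr.
  by rewrite exprM Ax.
have Vq : (a^+2 * b)^+q = x^+2 * y by rewrite exprMn exprAC.
have An0 : a * x != 0 by rewrite mulf_neq0.
have ha2 : a^+2 != 0 by rewrite expf_neq0.
have gE : gcdp N D %= Q <-> size (gcdp N D) = 3%N.
  split; first by move/eqp_size ->.
  by move=> s3; rewrite -dvdp_size_eqp // s3 sQ.
split; last by move/gE.
rewrite key QD Ax A3.
split.
  case=> h1 h0.
  rewrite h1 h0 mulr0 in I0 I1.
  have e1 : (a^+2*b)^+2 - (a*x)*(a^+2*b) - (a*x)^+3 = 0.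
    have : (a*x) * ((a^+2*b)^+2 - (a*x)*(a^+2*b) - (a*x)^+3) = 0.
      have -> : (a*x) * ((a^+2*b)^+2 - (a*x)*(a^+2*b) - (a*x)^+3) =
        (x^+2*y)*(a^+2*b)^+2 - (a*x)^+4 - (a*x)^+2*(a^+2*b) - (a*x)^+3*(a^+2*b)
        - (a^+2*b) * ((a^+2*b)*(x^+2*y) - (a*x)*(a^+2*b) - (a*x)^+3) by ring.
      by rewrite -I0 -I1 !mulr0 subr0.
    by move/eqP; rewrite mulf_eq0 (negbTE An0) /= => /eqP.
  exists (a^+2 * b); split.
  - rewrite Vq.
    have : (a^+2*b) * (x^+2*y - a^+2*b) = 0.
      have -> : (a^+2*b) * (x^+2*y - a^+2*b) =
        ((a^+2*b)*(x^+2*y) - (a*x)*(a^+2*b) - (a*x)^+3) - 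
        ((a^+2*b)^+2 - (a*x)*(a^+2*b) - (a*x)^+3) by ring.
      by rewrite -I0 e1 ?mulr0 subr0.
    by move/eqP; rewrite mulf_eq0 (negbTE (mulf_neq0 ha2 bn0)) /= subr_eq0 => /eqP.
  - by rewrite mulf_neq0.
  - exact: e1.
  - by rewrite mulrC mulKf.
case=> v [hv vn0 e hb].
have hab : a^+2 * b = v by rewrite hb mulrC divfK.
have hxy : x^+2 * y = v by rewrite -Vq hab.
rewrite hxy hab in I0 I1.
have F0 : -(a^+2*x)*r0 = 0 by rewrite I0 -e; ring.
have F1 : -(x^+2*a^+4)*r1 = 0.
  rewrite I1 (_ : _ - _ = (v + a*x) * (v ^+ 2 - a * x * v - (a * x) ^+ 3)); first by rewrite e mulr0.
  ring.
have n0 : -(a^+2*x) != 0 by rewrite oppr_eq0 mulf_neq0.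
have n1 : -(x^+2*a^+4) != 0 by rewrite oppr_eq0 mulf_neq0 ?expf_neq0.
split.
  by move/eqP: F1; rewrite mulf_eq0 (negbTE n1) => /eqP.
by move/eqP: F0; rewrite mulf_eq0 (negbTE n0) => /eqP.
Qed.
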